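(* Let $A$ be an associative algebra over a field $K$ with $A_0=\{0\}$. Then every weak multiplier of $A$ is a linear multiplier: $M(A)=M'(A)=LM(A)=LM'(A)$.
   Context: A map $T:A\to A$ (not assumed linear) is a weak multiplier if $xT(y)=T(x)y$ for all $x,y\in A$, and a multiplier if $xT(y)=T(xy)=T(x)y$ for all $x,y\in A$. $M(A)$, $M'(A)$ are the sets of multipliers and weak multipliers; $LM(A)$, $LM'(A)$ their subsets of $K$-linear maps. $A_0=\mathrm{Ann}_l(A)\cap\mathrm{Ann}_r(A)$ with $\mathrm{Ann}_l(A)=\{a: ax=0\ \forall x\}$, $\mathrm{Ann}_r(A)=\{a: xa=0\ \forall x\}$. *)

(* Defs.v *)
(* A (possibly non-unital) associative algebra over a field K
   is modelled as a K-vector space A (lmodType K) with a bilinear associative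
   multiplication mul : A -> A -> A. *)
From mathcomp Require Import all_boot all_order all_algebra.
Set Implicit Arguments. Unset Strict Implicit. Unset Printing Implicit Defensive.
Import GRing.Theory.
Local Open Scope ring_scope.

Definition assoc_algebra_mul (K : fieldType) (A : lmodType K) (mul : A -> A -> A) : Prop :=
  [/\ (forall x y z, mul x (mul y z) = mul (mul x y) z),
      (forall x y z, mul (x + y) z = mul x z + mul y z),
      (forall x y z, mul x (y + z) = mul x y + mul x z),
      (forall (k : K) x y, mul (k *: x) y = k *: mul x y)
    & (forall (k : K) x y, mul x (k *: y) = k *: mul x y)].

Definition ann_l (K : fieldType) (A : lmodType K) (mul : A -> A -> A) (a : A) : Prop :=
  forall x, mul a x = 0.
Definition ann_r (K : fieldType) (A : lmodType K) (mul : A -> A -> A) (a : A) : Prop :=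
  forall x, mul x a = 0.
Definition in_A0 (K : fieldType) (A : lmodType K) (mul : A -> A -> A) (a : A) : Prop :=
  ann_l mul a /\ ann_r mul a.

Definition weak_multiplier (K : fieldType) (A : lmodType K) (mul : A -> A -> A)
  (T : A -> A) : Prop :=
  forall x y, mul x (T y) = mul (T x) y.
Definition multiplier (K : fieldType) (A : lmodType K) (mul : A -> A -> A)
  (T : A -> A) : Prop :=
  forall x y, mul x (T y) = T (mul x y) /\ T (mul x y) = mul (T x) y.

Definition K_linear (K : fieldType) (A : lmodType K) (T : A -> A) : Prop :=
  (forall x y, T (x + y) = T x + T y) /\ (forall (k : K) x, T (k *: x) = k *: T x).

Definition lin_multiplier (K : fieldType) (A : lmodType K) (mul : A -> A -> A)
  (T : A -> A) : Prop := multiplier mul T /\ K_linear T.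
Definition lin_weak_multiplier (K : fieldType) (A : lmodType K) (mul : A -> A -> A)
  (T : A -> A) : Prop := weak_multiplier mul T /\ K_linear T.

(* Main.v *)
Require Import Defs.
From mathcomp Require Import all_boot all_order all_algebra.
Local Open Scope ring_scope.
Import GRing.Theory.

Section H.
Variables (K : fieldType) (A : lmodType K) (mul : A -> A -> A).
Hypothesis Halg : assoc_algebra_mul mul.

Lemma mD_l x y z : mul (x + y) z = mul x z + mul y z.
Proof. by case: Halg. Qed.
Lemma mD_r x y z : mul x (y + z) = mul x y + mul x z.
Proof. by case: Halg. Qed.
Lemma mA x y z : mul x (mul y z) = mul (mul x y) z.
Proof. by case: Halg. Qed.
Lemma mZ_l (k : K) x y : mul (k *: x) y = k *: mul x y.
Proof. by case: Halg. Qed.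
Lemma mZ_r (k : K) x y : mul x (k *: y) = k *: mul x y.
Proof. by case: Halg. Qed.

Lemma mB_r x y z : mul x (y - z) = mul x y - mul x z.
Proof.
have h0 : mul x 0 = 0.
  have := mD_r x 0 0; rewrite addr0 => /eqP; rewrite -subr_eq subrr => /eqP.
  by move=> <-.
have hN : mul x (- z) = - mul x z.
  by apply/eqP; rewrite -subr_eq0 opprK -mD_r addNr h0.
by rewrite mD_r hN.
Qed.
Lemma mB_l x y z : mul (y - z) x = mul y x - mul z x.
Proof.
have h0 : mul 0 x = 0.
  have := mD_l 0 0 x; rewrite addr0 => /eqP; rewrite -subr_eq subrr => /eqP.
  by move=> <-.
have hN : mul (- z) x = - mul z x.
  by apply/eqP; rewrite -subr_eq0 opprK -mD_l addNr h0.
by rewrite mD_l hN.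
Qed.
End H.

Theorem proposition5p1 (K : fieldType) (A : lmodType K) (mul : A -> A -> A)
  (Halg : assoc_algebra_mul mul)
  (HA0 : forall a : A, in_A0 mul a -> a = 0) :
  forall T : A -> A,
    (multiplier mul T <-> weak_multiplier mul T) /\
    (weak_multiplier mul T <-> lin_multiplier mul T) /\
    (lin_multiplier mul T <-> lin_weak_multiplier mul T).
Proof.
move=> T.
have eq0 : forall u v : A, in_A0 mul (u - v) -> u = v.
  by move=> u v /HA0 /eqP; rewrite subr_eq0 => /eqP.
have W2M : weak_multiplier mul T -> multiplier mul T /\ K_linear T.
  move=> W.
  have TM : forall x y, T (mul x y) = mul (T x) y.
    move=> x y; apply: eq0; split=> w.
    - rewrite mB_l //.
      have e1 : mul (T (mul x y)) w = mul (mul x y) (T w) by rewrite W.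
      have e2 : mul (mul (T x) y) w = mul (mul x y) (T w).
        by rewrite -W -mA // -mA // W.
      by rewrite e1 e2 subrr.
    - rewrite mB_r //.
      have e1 : mul w (T (mul x y)) = mul (T w) (mul x y) by rewrite W.
      have e2 : mul w (mul (T x) y) = mul (T w) (mul x y).
        by rewrite mA // W -mA.
      by rewrite e1 e2 subrr.
  split; first by move=> x y; rewrite TM W.
  split.
  - move=> x y; apply: eq0; split=> w.
    + by rewrite mB_l // mD_l // -!W mD_l // subrr.
    + by rewrite mB_r // mD_r // !W mD_r // subrr.
  - move=> k x; apply: eq0; split=> w.
    + by rewrite mB_l // mZ_l // -(W (k *: x)) mZ_l // -(W x) subrr.
    + by rewrite mB_r // mZ_r // (W w (k *: x)) mZ_r // (W w x) subrr.
have M2W : multiplier mul T -> weak_multiplier mul T.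
  by move=> M x y; case: (M x y) => -> ->.
split; first by split=> [/M2W|/W2M []].
split; first by split=> [/W2M|[/M2W]].
split=> [[/M2W W L]|[W L]]; first by [].
by case: (W2M W).
Qed.
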